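(* Let $\Gamma=(U\cup V,E)$ be a $3$-regular bipartite graph and let $\hat\Gamma$, $\eta$, $\eta'$, $\mathrm{sgn}$ and $\mu(F,f)$ be as described in the context. For any $2$-factor $F$ of $\Gamma$, any function $f:F\to\{0,1\}$ and any perfect matchings $\mu_1,\mu_2\in\mu(F,f)$, we have $\mathrm{sgn}(\mu_1)=\mathrm{sgn}(\mu_2)$.
   Context: Construction of $\hat\Gamma$: for each vertex $v$ of $\Gamma$ with neighbours $x,y,z$, there are four inner vertices $a_{v,S}$, one for each subset $S\subseteq\{x,y,z\}$ of even size (the set $I_v$), and six outer vertices $b_{v,u,0},b_{v,u,1}$ for $u\in\{x,y,z\}$ (the set $O_v$). Within the gadget, $a_{v,S}$ is adjacent to $b_{v,u,1}$ if $u\in S$ and to $b_{v,u,0}$ if $u\notin S$. For each edge $e=\{u,v\}\in E$ and $i\in\{0,1\}$ there is an edge $e_i$ joining $b_{v,u,i}$ and $b_{u,v,i}$. No other edges. Let $X=\bigcup_{v\in U}I_v\cup\bigcup_{v\in V}O_v$, $Y=\bigcup_{v\in V}I_v\cup\bigcup_{v\in U}O_v$, $n=|X|=|Y|=10|U|$, and fix bijections $\eta:X\to[n]$, $\eta':Y\to[n]$. A perfect matching is a bijection $\mu:X\to Y$ with $\mu(x)$ adjacent to $x$ for all $x$; $\mathrm{sgn}(\mu)$ is the sign of the permutation $\eta'\circ\mu\circ\eta^{-1}$ of $[n]$. A perfect matching $\mu$ is uniform if for every $e\in E$ at most one of $e_0,e_1$ is in $\mu$; then $F_\mu$ is the set of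 $e\in E$ with exactly one of $e_0,e_1$ in $\mu$, and $f_\mu(e)=i$ iff $e_i\in\mu$. A $2$-factor of $\Gamma$ is a set $F\subseteq E$ such that every vertex is incident to exactly two edges of $F$. $\mu(F,f)$ is the set of uniform perfect matchings $\mu$ with $F_\mu=F$ and $f_\mu=f$. *)

(* Defs.v *)
From mathcomp Require Import all_boot fingroup perm.
Set Implicit Arguments. Unset Strict Implicit. Unset Printing Implicit Defensive.

(* Vertex type of the gadget graph hat-Gamma built on Gamma with vertex type T:
   inl (v, A)    = inner vertex a_{v,A}
   inr (v, u, i) = outer vertex b_{v,u,i}   (i : bool, true = 1, false = 0) *)
Notation HV T := ((T * {set T}) + (T * T * bool))%type.

Section Gadget.
Variables (T : finType) (U : {set T}) (e : rel T).
(* Gamma = (U ∪ V, E) with V = ~: U and adjacency relation e. *)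

Definition nbhd (v : T) : {set T} := [set u | e v u].

Definition inner_ok (v : T) (A : {set T}) : bool :=
  (A \subset nbhd v) && ~~ odd #|A|.

Definition Iv (v : T) : {set HV T} :=
  [set x : HV T | if x is inl (w, A) then (w == v) && inner_ok v A else false].

Definition Ov (v : T) : {set HV T} :=
  [set x : HV T | if x is inr (w, u, _) then (w == v) && e v u else false].

Definition Xs : {set HV T} :=
  (\bigcup_(v in U) Iv v) :|: (\bigcup_(v in ~: U) Ov v).
Definition Ys : {set HV T} :=
  (\bigcup_(v in ~: U) Iv v) :|: (\bigcup_(v in U) Ov v).

Definition hadj (x y : HV T) : bool :=
  match x, y with
  | inl (v, A), inr (w, u, i) =>
      [&& inner_ok v A, w == v, e v u & i == (u \in A)]
  | inr (w, u, i), inl (v, A) =>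
      [&& inner_ok v A, w == v, e v u & i == (u \in A)]
  | inr (a, b, i), inr (c, d, j) =>
      [&& e a b, c == b, d == a & i == j]
  | _, _ => false
  end.

Definition edges : {set {set T}} :=
  [set s : {set T} | [exists u, exists v, e u v && (s == [set u; v])]].

Definition perfect_matching (mu : HV T -> HV T) : Prop :=
  [/\ {in Xs, forall x, mu x \in Ys /\ hadj x (mu x)},
      {in Xs &, injective mu} & mu @: Xs = Ys].

(* the pair {x, y} is the edge e_i of hat-Gamma associated to s = {u,v} *)
Definition ehat (s : {set T}) (i : bool) (x y : HV T) : bool :=
  [exists u, exists v,
     [&& e u v, s == [set u; v], x == inr (v, u, i) & y == inr (u, v, i)]].

Definition in_mu (mu : HV T -> HV T) (s : {set T}) (i : bool) : bool :=
  [exists x in Xs, ehat s i x (mu x)].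

Definition uniform (mu : HV T -> HV T) : Prop :=
  forall s, s \in edges -> ~~ (in_mu mu s false && in_mu mu s true).

Definition F_mu (mu : HV T -> HV T) : {set {set T}} :=
  [set s in edges | in_mu mu s false || in_mu mu s true].

Definition f_mu (mu : HV T -> HV T) (s : {set T}) : bool := in_mu mu s true.

Definition two_factor (F : {set {set T}}) : Prop :=
  F \subset edges /\ forall v : T, #|[set s in F | v \in s]| = 2.

Definition in_muFf (F : {set {set T}}) (f : {set T} -> bool)
    (mu : HV T -> HV T) : Prop :=
  [/\ perfect_matching mu, uniform mu, F_mu mu = F &
      {in F, forall s, f_mu mu s = f s}].

(* sign of the permutation eta' ∘ mu ∘ eta^{-1} of [n] (true = odd) *)
Definition sgn (n : nat) (eta eta' : HV T -> 'I_n) (mu : HV T -> HV T) : bool :=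
  odd_perm (insubd (1%g : {perm 'I_n})
    [ffun i : 'I_n => match [pick x in Xs | eta x == i] with
                      | Some x => eta' (mu x)
                      | None => i
                      end]).

End Gadget.

(* Main.v *)
Require Import Defs.
From mathcomp Require Import all_boot fingroup perm.
Set Implicit Arguments. Unset Strict Implicit. Unset Printing Implicit Defensive.

Definition A4 := option (option bool).
Definition A4s : seq A4 := [:: None; Some None; Some (Some false); Some (Some true)].
Definition B2s : seq (bool * bool) := [:: (false,false); (false,true); (true,false); (true,true)].
Definition allA (P : A4 -> bool) := all P A4s.
Definition allB (P : bool * bool -> bool) := all P B2s.
Definition allb (P : bool -> bool) := all P [:: false; true].

Lemma allAP P : allA P -> forall a, P a.
Proof. by move/allP=> H a; apply: H; case: a => [[[]|]|]. Qed.
Lemma allBP P : allB P -> forall a, P a.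
Proof. by move/allP=> H a; apply: H; case: a => [[] []]. Qed.
Lemma allbP P : allb P -> forall a, P a.
Proof. by move/allP=> H a; apply: H; case: a. Qed.

Definition adjU (cp cq : bool) (s : bool * bool) (a : A4) : bool :=
  match a with
  | None => s.1 == cp
  | Some None => s.2 == cq
  | Some (Some j) => j == s.1 (+) s.2
  end.

Definition tupU (a b c d : A4) (s : bool * bool) : A4 :=
  match s with
  | (false, false) => a | (false, true) => b | (true, false) => c | (true, true) => d end.
Definition tupV (a b c d : bool * bool) (s : A4) : bool * bool :=
  match s with
  | None => a | Some None => b | Some (Some false) => c | Some (Some true) => d end.

Definition validU cp cq (h : bool * bool -> A4) :=
  allB (fun s => adjU cp cq s (h s)) &&
  allB (fun s => allB (fun s' => (h s == h s') ==> (s == s'))).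
Definition chainU (h1 h2 : bool * bool -> A4) :=
  allB (fun s => allB (fun s1 => allB (fun s2 => allB (fun s3 =>
    (h1 s1 == h2 s) ==> (h1 s2 == h2 s1) ==> (h1 s3 == h2 s2) ==> (s3 == s))))).
Definition validV cp cq (g : A4 -> bool * bool) :=
  allA (fun a => adjU cp cq (g a) a) &&
  allA (fun s => allA (fun s' => (g s == g s') ==> (s == s'))).
Definition chainV (h1 h2 : A4 -> bool * bool) :=
  allA (fun s => allA (fun s1 => allA (fun s2 => allA (fun s3 =>
    (h1 s1 == h2 s) ==> (h1 s2 == h2 s1) ==> (h1 s3 == h2 s2) ==> (s3 == s))))).

Definition checkU := allb (fun cp => allb (fun cq =>
  allA (fun a1 => allA (fun b1 => allA (fun c1 => allA (fun d1 =>
  if validU cp cq (tupU a1 b1 c1 d1) then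
  allA (fun a2 => allA (fun b2 => allA (fun c2 => allA (fun d2 =>
  if validU cp cq (tupU a2 b2 c2 d2) then chainU (tupU a1 b1 c1 d1) (tupU a2 b2 c2 d2) else true))))
  else true)))))).
Definition checkV := allb (fun cp => allb (fun cq =>
  allB (fun a1 => allB (fun b1 => allB (fun c1 => allB (fun d1 =>
  if validV cp cq (tupV a1 b1 c1 d1) then
  allB (fun a2 => allB (fun b2 => allB (fun c2 => allB (fun d2 =>
  if validV cp cq (tupV a2 b2 c2 d2) then chainV (tupV a1 b1 c1 d1) (tupV a2 b2 c2 d2) else true))))
  else true)))))).

Lemma checkU_ok : checkU. Proof. by vm_compute. Qed.
Lemma checkV_ok : checkV. Proof. by vm_compute. Qed.

Lemma tupUE (h : bool * bool -> A4) :
  tupU (h (false,false)) (h (false,true)) (h (true,false)) (h (true,true)) =1 h.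
Proof. by case=> [[] []]. Qed.
Lemma tupVE (h : A4 -> bool * bool) :
  tupV (h None) (h (Some None)) (h (Some (Some false))) (h (Some (Some true))) =1 h.
Proof. by case=> [[[]|]|]. Qed.

Lemma coreU cp cq (h1 h2 : bool * bool -> A4) :
  (forall s, adjU cp cq s (h1 s)) -> injective h1 ->
  (forall s, adjU cp cq s (h2 s)) -> injective h2 ->
  forall s s1 s2 s3, h1 s1 = h2 s -> h1 s2 = h2 s1 -> h1 s3 = h2 s2 -> s3 = s.
Proof.
move=> a1 i1 a2 i2 s s1 s2 s3 E1 E2 E3.
have V1 : validU cp cq (tupU (h1 (false,false)) (h1 (false,true)) (h1 (true,false)) (h1 (true,true))).
  apply/andP; split; apply/allP => x _; rewrite ?tupUE //.
  by apply/allP => y _; rewrite !tupUE; apply/implyP => /eqP/i1 ->.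
have V2 : validU cp cq (tupU (h2 (false,false)) (h2 (false,true)) (h2 (true,false)) (h2 (true,true))).
  apply/andP; split; apply/allP => x _; rewrite ?tupUE //.
  by apply/allP => y _; rewrite !tupUE; apply/implyP => /eqP/i2 ->.
have := allbP checkU_ok cp => /allbP /(_ cq).
move=> /allAP/(_ (h1 (false,false))) /allAP/(_ (h1 (false,true)))
  /allAP/(_ (h1 (true,false))) /allAP/(_ (h1 (true,true))).
rewrite V1.
move=> /allAP/(_ (h2 (false,false))) /allAP/(_ (h2 (false,true)))
  /allAP/(_ (h2 (true,false))) /allAP/(_ (h2 (true,true))).
rewrite V2.
move=> /allBP/(_ s) /allBP/(_ s1) /allBP/(_ s2) /allBP/(_ s3).
by rewrite !tupUE E1 E2 E3 !eqxx /= => /eqP.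
Qed.

Lemma coreV cp cq (h1 h2 : A4 -> bool * bool) :
  (forall s, adjU cp cq (h1 s) s) -> injective h1 ->
  (forall s, adjU cp cq (h2 s) s) -> injective h2 ->
  forall s s1 s2 s3, h1 s1 = h2 s -> h1 s2 = h2 s1 -> h1 s3 = h2 s2 -> s3 = s.
Proof.
move=> a1 i1 a2 i2 s s1 s2 s3 E1 E2 E3.
have V1 : validV cp cq (tupV (h1 None) (h1 (Some None)) (h1 (Some (Some false))) (h1 (Some (Some true)))).
  apply/andP; split; apply/allP => x _; rewrite ?tupVE //.
  by apply/allP => y _; rewrite !tupVE; apply/implyP => /eqP/i1 ->.
have V2 : validV cp cq (tupV (h2 None) (h2 (Some None)) (h2 (Some (Some false))) (h2 (Some (Some true)))).
  apply/andP; split; apply/allP => x _; rewrite ?tupVE //.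
  by apply/allP => y _; rewrite !tupVE; apply/implyP => /eqP/i2 ->.
have := allbP checkV_ok cp => /allbP /(_ cq).
move=> /allBP/(_ (h1 None)) /allBP/(_ (h1 (Some None)))
  /allBP/(_ (h1 (Some (Some false)))) /allBP/(_ (h1 (Some (Some true)))).
rewrite V1.
move=> /allBP/(_ (h2 None)) /allBP/(_ (h2 (Some None)))
  /allBP/(_ (h2 (Some (Some false)))) /allBP/(_ (h2 (Some (Some true)))).
rewrite V2.
move=> /allAP/(_ s) /allAP/(_ s1) /allAP/(_ s2) /allAP/(_ s3).
by rewrite !tupVE E1 E2 E3 !eqxx /= => /eqP.
Qed.

Section Main.
Variables (T : finType) (U : {set T}) (e : rel T).
Hypothesis e_sym : symmetric e.
Hypothesis e_bip : forall x y, e x y -> (x \in U) = (y \notin U).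
Hypothesis e_3reg : forall v : T, #|[set u | e v u]| = 3.
Variables (F : {set {set T}}) (f : {set T} -> bool).
Hypothesis HF : two_factor e F.

Local Notation X := (Xs U e).
Local Notation Y := (Ys U e).

Lemma e_irr v : e v v = false.
Proof. by apply/negP => /e_bip; case: (v \in U). Qed.

Lemma e_UV v u : e v u -> (u \in U) = (v \notin U).
Proof. by move=> H; apply: e_bip; rewrite e_sym. Qed.

Lemma memIv (P : pred T) v A :
  (inl (v, A) \in \bigcup_(w | P w) Iv e w) = P v && inner_ok e v A.
Proof.
apply/bigcupP/andP => [[w Pw]|[Pv ok]].
  by rewrite inE => /andP[/eqP -> ->].
by exists v => //; rewrite inE eqxx.
Qed.

Lemma memOvl (P : pred T) v A :
  (inl (v, A) \in \bigcup_(w | P w) Ov e w) = false.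
Proof. by apply/bigcupP => [[w _]]; rewrite inE. Qed.

Lemma memOv (P : pred T) v u i :
  (inr (v, u, i) \in \bigcup_(w | P w) Ov e w) = P v && e v u.
Proof.
apply/bigcupP/andP => [[w Pw]|[Pv ok]].
  by rewrite inE => /andP[/eqP -> ->].
by exists v => //; rewrite inE eqxx.
Qed.

Lemma memIvr (P : pred T) v u i :
  (inr (v, u, i) \in \bigcup_(w | P w) Iv e w) = false.
Proof. by apply/bigcupP => [[w _]]; rewrite inE. Qed.

Lemma inXl v A : (inl (v, A) \in X) = (v \in U) && inner_ok e v A.
Proof. by rewrite /Xs inE memIv memOvl orbF. Qed.
Lemma inXr v u i : (inr (v, u, i) \in X) = (v \notin U) && e v u.
Proof. by rewrite /Xs inE memIvr memOv in_setC. Qed.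
Lemma inYl v A : (inl (v, A) \in Y) = (v \notin U) && inner_ok e v A.
Proof. by rewrite /Ys inE memIv memOvl orbF in_setC. Qed.
Lemma inYr v u i : (inr (v, u, i) \in Y) = (v \in U) && e v u.
Proof. by rewrite /Ys inE memIvr memOv. Qed.

Lemma set2_eq (a b c d : T) : a != b -> [set a; b] = [set c; d] ->
  (a = c /\ b = d) \/ (a = d /\ b = c).
Proof.
move=> nab E.
have : a \in [set c; d] by rewrite -E set21.
have : b \in [set c; d] by rewrite -E set22.
move=> /set2P[] Hb /set2P[] Ha; subst.
- by rewrite eqxx in nab.
- by right.
- by left.
- by rewrite eqxx in nab.
Qed.

Lemma in_edges v u : e v u -> [set v; u] \in edges e.
Proof.
move=> H; rewrite inE; apply/existsP; exists v; apply/existsP; exists u.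
by rewrite H eqxx.
Qed.

Lemma edge_at v s : s \in edges e -> v \in s -> exists2 p, e v p & s = [set v; p].
Proof.
rewrite inE => /existsP[a /existsP[b /andP[eab /eqP ->]]] /set2P[]->.
  by exists b.
by exists a; rewrite 1?e_sym // setUC.
Qed.

Lemma gadget v : exists p q r,
  [/\ [/\ e v p, e v q & e v r], [/\ p != q, p != r & q != r],
      [/\ [set v; p] \in F, [set v; q] \in F & [set v; r] \notin F] &
      forall u, e v u -> [|| u == p, u == q | u == r]].
Proof.
case: HF => Fsub Fcard.
have /eqP/cards2P[s1 [s2 [ns Es]]] := Fcard v.
have : s1 \in [set s in F | v \in s] by rewrite Es set21.
rewrite inE => /andP[s1F vs1].
have : s2 \in [set s in F | v \in s] by rewrite Es set22.
rewrite inE => /andP[s2F vs2].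
have [p evp Ep] := edge_at (subsetP Fsub _ s1F) vs1.
have [q evq Eq] := edge_at (subsetP Fsub _ s2F) vs2.
have npq : p != q by apply: contraNneq ns => E; rewrite Ep Eq E.
case: (boolP [exists r, e v r && (r \notin [set p; q])]) =>
  [/existsP[r /andP[evr]]|/existsPn H]; last first.
  have : [set u | e v u] \subset [set p; q].
    apply/subsetP => u; rewrite inE => evu.
    by move: (H u); rewrite evu /= negbK.
  by move/subset_leq_card; rewrite e_3reg cards2 npq.
rewrite !inE negb_or => /andP[nrp nrq].
have Hsub : [set p; q; r] \subset [set u | e v u].
  apply/subsetP => u; rewrite !inE.
  by case/orP => [/orP[]|] /eqP->.
have Hc : #|[set p; q; r]| = 3.
  by rewrite setUC cardsU1 cards2 !inE negb_or nrp nrq npq.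
have HE : [set p; q; r] = [set u | e v u].
  by apply/eqP; rewrite eqEcard Hsub e_3reg Hc.
exists p, q, r; split => //.
- by split => //; rewrite eq_sym.
- split; rewrite -?Ep -?Eq //.
  apply/negP => rF.
  have : [set v; r] \in [set s in F | v \in s] by rewrite inE rF set21.
  rewrite Es => /set2P[] E.
    have : r \in s1 by rewrite -E set22.
    by rewrite Ep => /set2P[] E'; [move: evr; rewrite E' e_irr | move: nrp; rewrite E' eqxx].
  have : r \in s2 by rewrite -E set22.
  by rewrite Eq => /set2P[] E'; [move: evr; rewrite E' e_irr | move: nrq; rewrite E' eqxx].
- move=> u evu.
  have : u \in [set u | e v u] by rewrite inE.
  by rewrite -HE !inE -orbA.
Qed.

Section Mu.
Variable mu : HV T -> HV T.
Hypothesis Hmu : in_muFf U e F f mu.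

Lemma mu_map x : x \in X -> mu x \in Y /\ hadj e x (mu x).
Proof. by case: Hmu => [[H _ _] _ _ _]; apply: H. Qed.
Lemma mu_inj : {in X &, injective mu}.
Proof. by case: Hmu => [[_ H _] _ _ _]. Qed.
Lemma mu_surj : mu @: X = Y.
Proof. by case: Hmu => [[_ _ H] _ _ _]. Qed.

Lemma F_in s : s \in F -> in_mu U e mu s (f s).
Proof.
case: Hmu => [_ Hu HFm Hf] sF.
have sE : s \in edges e by case: HF => /subsetP H _; apply: H.
have := Hf s sF; rewrite /f_mu; case: (f s) => Ht; first by rewrite Ht.
by move: sF; rewrite -HFm inE sE Ht orbF.
Qed.

Lemma mu_out v u i a b j : inr (v, u, i) \in X -> mu (inr (v, u, i)) = inr (a, b, j) ->
  [/\ a = u, b = v, j = i, [set v; u] \in F & f [set v; u] = i].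
Proof.
move=> Hx E.
have [_] := mu_map Hx; rewrite E /= => /and4P[evu /eqP Ea /eqP Eb /eqP Ej].
subst a b j.
have Hin : in_mu U e mu [set v; u] i.
  apply/existsP; exists (inr (v, u, i)); rewrite Hx /= E.
  apply/existsP; exists u; apply/existsP; exists v.
  by rewrite e_sym evu setUC !eqxx.
case: Hmu => [_ Hu HFm Hf].
have sE := in_edges evu.
have sF : [set v; u] \in F by rewrite -HFm inE sE; case: (i) Hin => ->; rewrite ?orbT.
split => //.
rewrite -Hf // /f_mu; case: (i) Hin => // Hin.
by move: (Hu _ sE); rewrite Hin /= => /negbTE.
Qed.

Lemma mu_ext v u : v \notin U -> e v u -> [set v; u] \in F ->
  mu (inr (v, u, f [set v; u])) = inr (u, v, f [set v; u]).
Proof.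
move=> vU evu sF.
have := F_in sF.
move=> /existsP[x /andP[Hx /existsP[u' /existsP[v' /and4P[e' /eqP Es /eqP Ex /eqP Ey]]]]].
subst x.
have nvu : v != u by apply: contraTneq evu => ->; rewrite e_irr.
move: Hx; rewrite inXr => /andP[v'U _].
have [[E1 E2]|[E1 E2]] := set2_eq nvu Es; subst.
  by move: v'U; rewrite (e_UV evu) vU.
by rewrite Ey.
Qed.

Lemma mu_inl_target v A : inl (v, A) \in X ->
  exists u, [/\ e v u, inner_ok e v A & mu (inl (v, A)) = inr (v, u, u \in A)].
Proof.
move=> Hx; have [_] := mu_map Hx.
case: (mu _) => [[w B]|[[w u] i]] //= /and4P[ok /eqP -> evu /eqP ->].
by exists u.
Qed.

Lemma mu_inr_inl v u i w A : inr (v, u, i) \in X -> mu (inr (v, u, i)) = inl (w, A) ->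
  [/\ w = v, inner_ok e v A & (u \in A) = i].
Proof.
move=> Hx E; have [_] := mu_map Hx; rewrite E /= => /and4P[ok /eqP -> evu /eqP ->].
by [].
Qed.

End Mu.

Section Gad.
Variables (v p q r : T).
Hypotheses (evp : e v p) (evq : e v q) (evr : e v r).
Hypotheses (npq : p != q) (npr : p != r) (nqr : q != r).
Hypotheses (pF : [set v; p] \in F) (qF : [set v; q] \in F) (rF : [set v; r] \notin F).
Hypothesis nb3 : forall u, e v u -> [|| u == p, u == q | u == r].

Definition cp := ~~ f [set v; p].
Definition cq := ~~ f [set v; q].

Lemma even_sub A : inner_ok e v A -> (r \in A) = (p \in A) (+) (q \in A).
Proof.
case/andP => sub ev.
have nqp : q != p by rewrite eq_sym.
have nrp : r != p by rewrite eq_sym.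
have nrq : r != q by rewrite eq_sym.
have E0 : #|A :\ p :\ q :\ r| = 0.
  apply/eqP; rewrite cards_eq0; apply/eqP/setP => u; rewrite !inE.
  case: (boolP (u \in A)) => uA; rewrite ?andbF //.
  have := subsetP sub u uA; rewrite inE => /nb3.
  by case/or3P => /eqP ->; rewrite eqxx /= ?andbF.
have E : #|A| = (p \in A) + ((q \in A) + (r \in A)).
  rewrite (cardsD1 p) (cardsD1 q (A :\ p)) (cardsD1 r (A :\ p :\ q)) E0.
  by rewrite !in_setD1 nqp nrp nrq addn0.
move: ev; rewrite E.
by case: (p \in A); case: (q \in A); case: (r \in A).
Qed.

Lemma inner_eq A B : inner_ok e v A -> inner_ok e v B ->
  (p \in A) = (p \in B) -> (q \in A) = (q \in B) -> A = B.
Proof.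
move=> okA okB Ep Eq; apply/setP => u.
case: (boolP (e v u)) => evu.
  have := nb3 evu; case/or3P => /eqP -> //.
  by rewrite (even_sub okA) (even_sub okB) Ep Eq.
case/andP: okA => sA _; case/andP: okB => sB _.
have uA : u \notin A by apply: contra evu => /(subsetP sA); rewrite inE.
have uB : u \notin B by apply: contra evu => /(subsetP sB); rewrite inE.
by rewrite (negbTE uA) (negbTE uB).
Qed.

Definition decS (bp bq : bool) : {set T} :=
  if bp then (if bq then [set p; q] else [set p; r])
  else (if bq then [set q; r] else set0).

Lemma decS_ok bp bq : inner_ok e v (decS bp bq).
Proof.
rewrite /inner_ok /decS; case: bp; case: bq; apply/andP; split;
  rewrite ?cards2 ?cards0 ?npq ?npr ?nqr ?sub0set //;
  by apply/subsetP => u; rewrite !inE => /orP[]/eqP->.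
Qed.

Lemma decS_p bp bq : (p \in decS bp bq) = bp.
Proof.
by rewrite /decS; case: bp; case: bq; rewrite !inE ?eqxx ?(negbTE npq) ?(negbTE npr).
Qed.

Lemma decS_q bp bq : (q \in decS bp bq) = bq.
Proof.
have nqp : q != p by rewrite eq_sym.
by rewrite /decS; case: bp; case: bq; rewrite !inE ?eqxx ?(negbTE nqp) ?(negbTE nqr).
Qed.

Definition encS (x : HV T) : bool * bool :=
  if x is inl (_, A) then (p \in A, q \in A) else (false, false).
Definition encO (x : HV T) : A4 :=
  if x is inr (_, u, i) then
    (if u == p then None else if u == q then Some None else Some (Some i))
  else None.
Definition decO (a : A4) : HV T :=
  match a with
  | None => inr (v, p, cp)
  | Some None => inr (v, q, cq)
  | Some (Some j) => inr (v, r, j)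
  end.

Lemma encO_decO a : encO (decO a) = a.
Proof.
have nqp : q != p by rewrite eq_sym.
have nrp : r != p by rewrite eq_sym.
have nrq : r != q by rewrite eq_sym.
by case: a => [[j|]|] /=; rewrite ?eqxx ?(negbTE nqp) ?(negbTE nrp) ?(negbTE nrq).
Qed.


Section GU.
Hypothesis vU : v \in U.

Definition hU (mu : HV T -> HV T) (s : bool * bool) : A4 :=
  encO (mu (inl (v, decS s.1 s.2))).

Lemma U_key mu : in_muFf U e F f mu -> forall s,
  mu (inl (v, decS s.1 s.2)) = decO (hU mu s) /\ adjU cp cq s (hU mu s).
Proof.
move=> Hmu s.
have Hx : inl (v, decS s.1 s.2) \in X by rewrite inXl vU decS_ok.
have [u [evu _ E]] := mu_inl_target Hmu Hx.
have uU : u \notin U by rewrite (e_UV evu) negbK.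
have nxt : [set v; u] \in F -> (u \in decS s.1 s.2) = ~~ f [set v; u].
  move=> uF.
  case Hi: ((u \in decS s.1 s.2) == f [set v; u]); last first.
    by move: Hi; case: (u \in _); case: (f _).
  move/eqP: Hi => Hi.
  have uF' : [set u; v] \in F by rewrite setUC.
  have eu : e u v by rewrite e_sym.
  have := mu_ext Hmu uU eu uF'.
  rewrite [[set u; v]]setUC -Hi -E => /(mu_inj Hmu).
  by rewrite inXr uU eu Hx => /(_ isT isT).
rewrite /hU E.
have nqp : q != p by rewrite eq_sym.
have nrp : r != p by rewrite eq_sym.
have nrq : r != q by rewrite eq_sym.
have := nb3 evu; case/or3P => /eqP Eu; subst u => /=.
- by rewrite eqxx /= /cp -(nxt pF) decS_p eqxx.
- by rewrite (negbTE nqp) eqxx /= /cq -(nxt qF) decS_q eqxx.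
- rewrite (negbTE nrp) (negbTE nrq) /=; split => //.
  by rewrite (even_sub (decS_ok _ _)) decS_p decS_q.
Qed.

Lemma U_inj mu : in_muFf U e F f mu -> injective (hU mu).
Proof.
move=> Hmu s s' Eh.
have [E1 _] := U_key Hmu s; have [E2 _] := U_key Hmu s'.
have : mu (inl (v, decS s.1 s.2)) = mu (inl (v, decS s'.1 s'.2)) by rewrite E1 E2 Eh.
move/(mu_inj Hmu); rewrite !inXl vU !decS_ok => /(_ isT isT) [] ED.
have := decS_p s.1 s.2; have := decS_q s.1 s.2.
rewrite ED decS_p decS_q.
by case: s {E1 Eh ED} => a b; case: s' {E2} => a' b' /= -> ->.
Qed.

Lemma U_step mu1 mu2 : in_muFf U e F f mu1 -> in_muFf U e F f mu2 ->
  forall A x1, inl (v, A) \in X -> x1 \in X -> mu1 x1 = mu2 (inl (v, A)) ->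
  exists2 A1, x1 = inl (v, A1) & inl (v, A1) \in X.
Proof.
move=> H1 H2 A x1 Hx Hx1 E.
have [u [evu _ E2]] := mu_inl_target H2 Hx.
move: Hx1 E; case: x1 => [[w B]|[[w u'] i']] Hx1 E.
  have [u1 [_ _ E1]] := mu_inl_target H1 Hx1.
  by move: E; rewrite E1 E2 => [[Ew _ _]]; subst w; exists B.
rewrite E2 in E.
have [Eu Ev Ei sF fi] := mu_out H1 Hx1 E; subst.
move: (Hx1); rewrite inXr => /andP[wU ewv].
have := mu_ext H2 wU ewv sF; rewrite fi -E2 => /(mu_inj H2).
by move=> /(_ Hx1 Hx).
Qed.

Lemma U_enc mu A : inl (v, A) \in X -> hU mu (encS (inl (v, A))) = encO (mu (inl (v, A))).
Proof.
rewrite inXl => /andP[_ ok].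
rewrite /hU /=.
have -> // : decS (p \in A) (q \in A) = A.
by apply: inner_eq; rewrite ?decS_ok ?decS_p ?decS_q.
Qed.

Lemma U_loc mu1 mu2 : in_muFf U e F f mu1 -> in_muFf U e F f mu2 ->
  forall A x1 x2 x3, inl (v, A) \in X -> x1 \in X -> x2 \in X -> x3 \in X ->
  mu1 x1 = mu2 (inl (v, A)) -> mu1 x2 = mu2 x1 -> mu1 x3 = mu2 x2 -> x3 = inl (v, A).
Proof.
move=> H1 H2 A x1 x2 x3 Hx Hx1 Hx2 Hx3 E1 E2 E3.
have [A1 ? HA1] := U_step H1 H2 Hx Hx1 E1; subst x1.
have [A2 ? HA2] := U_step H1 H2 HA1 Hx2 E2; subst x2.
have [A3 ? HA3] := U_step H1 H2 HA2 Hx3 E3; subst x3.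
have C : encS (inl (v, A3)) = encS (inl (v, A)).
  apply: (coreU (fun s => (U_key H1 s).2) (U_inj H1) (fun s => (U_key H2 s).2) (U_inj H2)
    (s1 := encS (inl (v, A1))) (s2 := encS (inl (v, A2)))).
  - by rewrite !U_enc // E1.
  - by rewrite !U_enc // E2.
  - by rewrite !U_enc // E3.
move: C => /= [C1 C2]; congr inl; congr pair.
move: HA3 Hx; rewrite !inXl => /andP[_ ok3] /andP[_ ok].
exact: inner_eq.
Qed.

End GU.

Section GV.
Hypothesis vU : v \notin U.

Definition gV (mu : HV T -> HV T) (a : A4) : bool * bool := encS (mu (decO a)).

Lemma decO_X a : decO a \in X.
Proof. by case: a => [[j|]|]; rewrite inXr vU ?evp ?evq ?evr. Qed.

Lemma V_gen mu : in_muFf U e F f mu -> forall u j, inr (v, u, j) \in X ->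
  ~~ (([set v; u] \in F) && (f [set v; u] == j)) ->
  exists A, [/\ mu (inr (v, u, j)) = inl (v, A), inner_ok e v A & (u \in A) = j].
Proof.
move=> Hmu u j Hx Hn.
case E: (mu (inr (v, u, j))) => [[w A]|[[a b] j']].
  by have [-> ok Hu] := mu_inr_inl Hmu Hx E; exists A.
have [_ _ _ sF fj] := mu_out Hmu Hx E.
by move: Hn; rewrite sF fj eqxx.
Qed.

Lemma V_key mu : in_muFf U e F f mu -> forall a,
  mu (decO a) = inl (v, decS (gV mu a).1 (gV mu a).2) /\ adjU cp cq (gV mu a) a.
Proof.
move=> Hmu a.
have [A [E ok Hu]] : exists A, [/\ mu (decO a) = inl (v, A), inner_ok e v A &
    match a with None => (p \in A) = cp | Some None => (q \in A) = cq
    | Some (Some j) => (r \in A) = j end].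
  case: a => [[j|]|] /=; apply: V_gen => //; rewrite ?inXr ?vU ?evp ?evq ?evr //.
  - by rewrite (negbTE rF).
  - by rewrite qF /cq; case: (f _).
  - by rewrite pF /cp; case: (f _).
rewrite /gV E /=.
have -> : decS (p \in A) (q \in A) = A.
  by apply: inner_eq; rewrite ?decS_ok ?decS_p ?decS_q.
split => //.
case: a E Hu => [[j|]|] _ /= Hu; rewrite ?Hu ?eqxx //.
by rewrite -Hu (even_sub ok).
Qed.

Lemma V_inj mu : in_muFf U e F f mu -> injective (gV mu).
Proof.
move=> Hmu a a' Eg.
have [E1 _] := V_key Hmu a; have [E2 _] := V_key Hmu a'.
have : mu (decO a) = mu (decO a') by rewrite E1 E2 Eg.
move/(mu_inj Hmu) => /(_ (decO_X a) (decO_X a')) /(congr1 encO).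
by rewrite !encO_decO.
Qed.

Lemma V_dec mu : in_muFf U e F f mu -> forall u i B, inr (v, u, i) \in X ->
  mu (inr (v, u, i)) = inl B -> inr (v, u, i) = decO (encO (inr (v, u, i))).
Proof.
move=> Hmu u i B Hx E.
move: (Hx); rewrite inXr => /andP[_ evu].
have nqp : q != p by rewrite eq_sym.
have nrp : r != p by rewrite eq_sym.
have nrq : r != q by rewrite eq_sym.
have := nb3 evu; case/or3P => /eqP Eu; subst u => /=.
- rewrite eqxx /cp; congr inr; congr pair.
  case: (boolP (i == f [set v; p])) => [/eqP Ei|]; last by rewrite /cp; case: (i); case: (f _).
  by move: E; rewrite Ei (mu_ext Hmu vU evp pF).
- rewrite eqxx (negbTE nqp) /cq; congr inr; congr pair.
  case: (boolP (i == f [set v; q])) => [/eqP Ei|]; last by rewrite /cq; case: (i); case: (f _).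
  by move: E; rewrite Ei (mu_ext Hmu vU evq qF).
- by rewrite (negbTE nrp) (negbTE nrq).
Qed.

Lemma V_step mu1 mu2 : in_muFf U e F f mu1 -> in_muFf U e F f mu2 ->
  forall u i B x1, inr (v, u, i) \in X -> mu2 (inr (v, u, i)) = inl B ->
  x1 \in X -> mu1 x1 = mu2 (inr (v, u, i)) ->
  exists u1, exists i1, [/\ x1 = inr (v, u1, i1), (exists B1, mu1 x1 = inl B1)
     & (exists B2, mu2 x1 = inl B2)].
Proof.
move=> H1 H2 u i [w A] x1 Hx E Hx1 E1.
have [Ew _ _] := mu_inr_inl H2 Hx E; subst w.
rewrite E in E1.
move: Hx1 E1; case: x1 => [[w B]|[[w u1] i1]] Hx1 E1.
  by have [_] := mu_map H1 Hx1; rewrite E1.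
have [Ew _ _] := mu_inr_inl H1 Hx1 E1; subst w.
exists u1, i1; split => //; first by exists (v, A).
case E2: (mu2 (inr (v, u1, i1))) => [B2|[[a b] j]]; first by exists B2.
have [_ _ _ sF fi] := mu_out H2 Hx1 E2.
move: (Hx1); rewrite inXr => /andP[_ evu1].
by move: E1; rewrite -fi (mu_ext H1 vU evu1 sF).
Qed.

Lemma V_loc mu1 mu2 : in_muFf U e F f mu1 -> in_muFf U e F f mu2 ->
  forall u i B x1 x2 x3, inr (v, u, i) \in X -> mu2 (inr (v, u, i)) = inl B ->
  x1 \in X -> x2 \in X -> x3 \in X ->
  mu1 x1 = mu2 (inr (v, u, i)) -> mu1 x2 = mu2 x1 -> mu1 x3 = mu2 x2 ->
  x3 = inr (v, u, i).
Proof.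
move=> H1 H2 u i B x1 x2 x3 Hx E Hx1 Hx2 Hx3 E1 E2 E3.
have [u1 [i1 [? [B1 F1] [B1' G1]]]] := V_step H1 H2 Hx E Hx1 E1; subst x1.
have [u2 [i2 [? [B2 F2] [B2' G2]]]] := V_step H1 H2 Hx1 G1 Hx2 E2; subst x2.
have [u3 [i3 [? [B3 F3] [B3' G3]]]] := V_step H1 H2 Hx2 G2 Hx3 E3; subst x3.
have D := V_dec H2 Hx E.
have D1 := V_dec H1 Hx1 F1.
have D2 := V_dec H1 Hx2 F2.
have D3 := V_dec H1 Hx3 F3.
have C : encO (inr (v, u3, i3)) = encO (inr (v, u, i)).
  apply: (coreV (fun s => (V_key H1 s).2) (V_inj H1) (fun s => (V_key H2 s).2) (V_inj H2)
    (s1 := encO (inr (v, u1, i1))) (s2 := encO (inr (v, u2, i2)))).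
  - by rewrite /gV -D -D1 E1.
  - by rewrite /gV -D1 -D2 E2.
  - by rewrite /gV -D2 -D3 E3.
by rewrite D3 C -D.
Qed.

End GV.
End Gad.

Lemma LOC mu1 mu2 : in_muFf U e F f mu1 -> in_muFf U e F f mu2 ->
  forall x x1 x2 x3, x \in X -> x1 \in X -> x2 \in X -> x3 \in X ->
  mu1 x1 = mu2 x -> mu1 x2 = mu2 x1 -> mu1 x3 = mu2 x2 -> x3 = x.
Proof.
move=> H1 H2 [[v A]|[[v u] i]] x1 x2 x3 Hx Hx1 Hx2 Hx3 E1 E2 E3.
  move: (Hx); rewrite inXl => /andP[vU _].
  have [p [q [r [[evp evq evr] [npq npr nqr] [pF qF rF] nb3]]]] := gadget v.
  exact: (U_loc evp evq evr npq npr nqr pF qF rF nb3 vU H1 H2 Hx Hx1 Hx2 Hx3 E1 E2 E3).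
move: (Hx); rewrite inXr => /andP[vU evu].
case E: (mu2 (inr (v, u, i))) => [B|[[a b] j]].
  have [p [q [r [[evp evq evr] [npq npr nqr] [pF qF rF] nb3]]]] := gadget v.
  exact: (V_loc evp evq evr npq npr nqr pF qF rF nb3 vU H1 H2 Hx E Hx1 Hx2 Hx3 E1 E2 E3).
have [? ? ? sF fi] := mu_out H2 Hx E; subst a b j.
have E' : mu1 (inr (v, u, i)) = mu2 (inr (v, u, i)).
  by rewrite E -fi (mu_ext H1 vU evu sF).
have ex1 : x1 = inr (v, u, i) by apply: (mu_inj H1) => //; rewrite E1 E'.
subst x1.
have ex2 : x2 = inr (v, u, i) by apply: (mu_inj H1) => //; rewrite E2 E'.
subst x2.
by apply: (mu_inj H1) => //; rewrite E3 E'.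
Qed.

Section Sign.
Variables (n : nat) (eta eta' : HV T -> 'I_n).
Hypothesis eta_bij : {in X &, injective eta} /\ eta @: X = [set: 'I_n].
Hypothesis eta'_bij : {in Y &, injective eta'} /\ eta' @: Y = [set: 'I_n].

Lemma eta_onto i : exists2 x, x \in X & i = eta x.
Proof.
have : i \in [set: 'I_n] by rewrite inE.
by case: eta_bij => _ <- /imsetP[x Hx ->]; exists x.
Qed.

Lemma sgn_perm mu : in_muFf U e F f mu -> exists P : {perm 'I_n},
  sgn U e eta eta' mu = odd_perm P /\ forall x, x \in X -> P (eta x) = eta' (mu x).
Proof.
move=> Hmu; rewrite /sgn.
set g := [ffun i : 'I_n => _].
have gE : forall x, x \in X -> g (eta x) = eta' (mu x).
  move=> x Hx; rewrite /g ffunE; case: pickP => [x' /andP[Hx' /eqP Ex]|H].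
    by case: eta_bij => inj _; rewrite (inj _ _ Hx' Hx Ex).
  by have := H x; rewrite Hx eqxx.
have ginj : injective g.
  move=> i j; have [x Hx ->] := eta_onto i; have [y Hy ->] := eta_onto j.
  rewrite !gE // => /(proj1 eta'_bij).
  have [Yx _] := mu_map Hmu Hx; have [Yy _] := mu_map Hmu Hy.
  by move=> /(_ Yx Yy) /(mu_inj Hmu) -> .
exists (perm ginj); split.
  congr odd_perm; apply/permP => i; rewrite permE.
  have gi : g \in [pred h : {ffun 'I_n -> 'I_n} | injectiveb h] by apply/injectiveP.
  by rewrite /insubd insubT /= [@fun_of_perm]unlock SubK.
by move=> x Hx; rewrite permE gE.
Qed.

Lemma main_sec mu1 mu2 : in_muFf U e F f mu1 -> in_muFf U e F f mu2 ->
  sgn U e eta eta' mu1 = sgn U e eta eta' mu2.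
Proof.
move=> H1 H2.
have [P1 [-> P1E]] := sgn_perm H1.
have [P2 [-> P2E]] := sgn_perm H2.
set R := (P2 * P1^-1)%g.
have step : forall x, x \in X -> exists2 x1, x1 \in X & mu1 x1 = mu2 x /\ R (eta x) = eta x1.
  move=> x Hx.
  have [Yx _] := mu_map H2 Hx.
  move: Yx; rewrite -(mu_surj H1) => /imsetP[x1 Hx1 E].
  exists x1 => //; split => //.
  by rewrite /R permM P2E // E -P1E // permK.
have R3 : (R ^+ 3)%g = 1%g.
  apply/permP => i; rewrite perm1 permX /=.
  have [x Hx ->] := eta_onto i.
  have [x1 Hx1 [E1 ->]] := step x Hx.
  have [x2 Hx2 [E2 ->]] := step x1 Hx1.
  have [x3 Hx3 [E3 ->]] := step x2 Hx2.
  by rewrite (LOC H1 H2 Hx Hx1 Hx2 Hx3 E1 E2 E3).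
have -> : P2 = (R * P1)%g by rewrite /R -mulgA mulVg mulg1.
rewrite odd_permM.
have : odd_perm (R ^+ 3)%g = false by rewrite R3 odd_perm1.
rewrite !expgS expg0 mulg1 !odd_permM.
by case: (odd_perm P2); case: (odd_perm P1^-1%g); case: (odd_perm P1).
Qed.

End Sign.
End Main.

Theorem mainTheorem4 (T : finType) (U : {set T}) (e : rel T)
    (e_sym : symmetric e)
    (e_bip : forall x y, e x y -> (x \in U) = (y \notin U))
    (e_3reg : forall v : T, #|[set u | e v u]| = 3)
    (n : nat) (eta eta' : HV T -> 'I_n)
    (eta_bij : {in Xs U e &, injective eta} /\ eta @: Xs U e = [set: 'I_n])
    (eta'_bij : {in Ys U e &, injective eta'} /\ eta' @: Ys U e = [set: 'I_n])
    (F : {set {set T}}) (f : {set T} -> bool)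
    (mu1 mu2 : HV T -> HV T) :
  two_factor e F ->
  in_muFf U e F f mu1 -> in_muFf U e F f mu2 ->
  sgn U e eta eta' mu1 = sgn U e eta eta' mu2.
Proof.
move=> HF H1 H2.
exact: (main_sec e_sym e_bip e_3reg HF eta_bij eta'_bij H1 H2).
Qed.
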